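(* Let $k<n$. No location-allocation mechanism $M_A$ that is allocation-anonymous is DIC.
   Context: There are $n$ agents $N=\{1,\dots,n\}$ with locations $x_i\in[0,1]$, profile $\boldsymbol{x}$; the facility has capacity $k$ (positive integer). Let $N_k=\{A\subseteq N: 0<|A|\le k\}$. A location-allocation mechanism is a function $M_A:[0,1]^n\to[0,1]\times N_k$, written $M_A(\boldsymbol{x})=(s_{\boldsymbol{x}},A_{\boldsymbol{x}})$, choosing from the reported locations a facility location and a set of agents allowed to be served. Agent $i$ with true location $x_i$ gets utility $1-|s-x_i|$ from outcome $(s,A)$ if $i\in A$, and $0$ if $i\notin A$. $M_A$ is DIC if for every agent $i$, every true location $x_i$, every report $x_i'$ and every reports $\hat{\boldsymbol{x}}_{-i}$ of the other agents, agent $i$'s utility from $M_A(x_i,\hat{\boldsymbol{x}}_{-i})$ is at least its utility from $M_A(x_i',\hat{\boldsymbol{x}}_{-i})$. A profile $\boldsymbol{x}$ is $i$-identifiable if $x_i\ne x_j$ for all $j\ne i$. $M_A$ is allocation-anonymous if for all distinct $i,j\in N$ and every $i$-identifiable profile $\boldsymbol{x}$, letting $\boldsymbol{x}'$ be obtained from $\boldsymbol{x}$ by swapping the locations of $i$ and $j$ ($x_i'=x_j$, $x_j'=x_i$, $x_\ell'=x_\ell$ otherwise), we have $i\in A_{\boldsymbol{x}}$ if and only if $j\in A_{\boldsymbol{x}'}$. *)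

(* Defs.v *)
From HB Require Import structures.
From mathcomp Require Import all_boot all_order all_algebra.
From mathcomp Require Import reals.
Set Implicit Arguments. Unset Strict Implicit. Unset Printing Implicit Defensive.
Import Order.TTheory GRing.Theory Num.Theory.
Local Open Scope ring_scope.

Definition profile (R : realType) (n : nat) := {ffun 'I_n -> R}.

(* Outcome: facility location and set of served agents. *)
Definition mechanism (R : realType) (n : nat) := profile R n -> R * {set 'I_n}.

Definition in01 (R : realType) (x : R) : Prop := 0 <= x <= 1.

Definition valid_profile (R : realType) (n : nat) (x : profile R n) : Prop :=
  forall i, in01 (x i).

Definition la_mechanism (R : realType) (n k : nat) (M : mechanism R n) : Prop :=
  forall x : profile R n, valid_profile x ->
    in01 (M x).1 /\ (0 < #|(M x).2| <= k)%N.

Definition utility (R : realType) (n : nat) (o : R * {set 'I_n}) (i : 'I_n) (xi : R) : R :=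
  if i \in o.2 then 1 - `|o.1 - xi| else 0.

Definition upd (R : realType) (n : nat) (xhat : profile R n) (i : 'I_n) (v : R) : profile R n :=
  [ffun j => if j == i then v else xhat j].

Definition DIC (R : realType) (n : nat) (M : mechanism R n) : Prop :=
  forall (i : 'I_n) (xi xi' : R) (xhat : profile R n),
    in01 xi -> in01 xi' -> valid_profile xhat ->
    utility (M (upd xhat i xi')) i xi <= utility (M (upd xhat i xi)) i xi.

Definition identifiable (R : realType) (n : nat) (i : 'I_n) (x : profile R n) : Prop :=
  forall j, j != i -> x i != x j.

Definition swap_prof (R : realType) (n : nat) (x : profile R n) (i j : 'I_n) : profile R n :=
  [ffun l => if l == i then x j else if l == j then x i else x l].

Definition allocation_anonymous (R : realType) (n : nat) (M : mechanism R n) : Prop :=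
  forall (i j : 'I_n), i != j -> forall x : profile R n, valid_profile x ->
    identifiable i x ->
    (i \in (M x).2) = (j \in (M (swap_prof x i j)).2).

(* Main.v *)
Require Import Defs.
From mathcomp Require Import all_boot all_order all_algebra.
From mathcomp Require Import reals.
From mathcomp Require Import lra.
Set Implicit Arguments. Unset Strict Implicit. Unset Printing Implicit Defensive.
Import Order.TTheory GRing.Theory Num.Theory.
Local Open Scope ring_scope.

Lemma valid_upd (R : realType) (n : nat) (p : profile R n) i v :
  valid_profile p -> in01 v -> valid_profile (upd p i v).
Proof. by move=> vp hv j; rewrite /upd ffunE; case: ifP. Qed.

Lemma served_mono (R : realType) (n k : nat) (M : mechanism R n) :
  la_mechanism k M -> DIC M -> forall (p : profile R n) i (t v : R),
  valid_profile p -> 0 < t < 1 -> in01 v ->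
  i \in (M (upd p i v)).2 -> i \in (M (upd p i t)).2.
Proof.
move=> LA D p i t v vp /andP[t0 t1] hv Hiv.
have ht : in01 t by rewrite /in01; apply/andP; split; lra.
have H := D i t v p ht hv vp.
apply: contraT => Hn; move: H; rewrite /utility (negbTE Hn) Hiv.
have [/andP[s0 s1] _] := LA _ (valid_upd i vp hv).
set s := (M (upd p i v)).1 in s0 s1 *.
have : `|s - t| < 1 by rewrite ltr_norml; apply/andP; split; lra.
lra.
Qed.

Theorem theorem5p3 (R : realType) (n k : nat) :
  (0 < k)%N -> (k < n)%N ->
  forall M : mechanism R n,
    la_mechanism k M -> allocation_anonymous M -> ~ DIC M.
Proof.
move=> k0 kn M LA AA D.
pose e : profile R n := [ffun _ => 1/2].
have ve : valid_profile e by move=> j; rewrite /e ffunE /in01; apply/andP; split; lra.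
have h14 : in01 (1/4 : R) by rewrite /in01; apply/andP; split; lra.
have h12 : in01 (1/2 : R) by rewrite /in01; apply/andP; split; lra.
have ue : forall i, upd e i (1/2) = e.
  by move=> i; apply/ffunP => j; rewrite /upd /e !ffunE; case: ifP.
have st : forall i, (i \in (M e).2) = (i \in (M (upd e i (1/4))).2).
  move=> i; apply/idP/idP => H.
  - apply: (served_mono LA D (v := 1/2)) => //; first by apply/andP; split; lra.
    by rewrite ue.
  - rewrite -(ue i); apply: (served_mono LA D (v := 1/4)) => //.
    by apply/andP; split; lra.
have eq : forall i j, i != j -> (i \in (M e).2) = (j \in (M e).2).
  move=> i j ij.
  have idf : identifiable i (upd e i (1/4)).
    move=> l li; rewrite /upd /e !ffunE eqxx (negbTE li).
    apply/eqP => h; lra.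
  have sw : swap_prof (upd e i (1/4)) i j = upd e j (1/4).
    apply/ffunP => l; rewrite /swap_prof /upd /e !ffunE eqxx.
    by case: (eqVneq l i) => [->|li] //; rewrite eq_sym.
  rewrite st (AA i j ij _ (valid_upd i ve h14) idf) sw -st //.
have n0 : (0 < n)%N by apply: leq_trans kn.
pose i0 : 'I_n := Ordinal n0.
have [_ /andP[c0 ck]] := LA e ve.
case Hi0: (i0 \in (M e).2).
- have : (M e).2 = setT.
    apply/setP => j; rewrite in_setT.
    case: (eqVneq i0 j) => [<-//|ij]; by rewrite -(eq _ _ ij).
  move=> hT; rewrite hT cardsT card_ord in ck.
  by move: (leq_trans kn ck); rewrite ltnn.
- have : (M e).2 = set0.
    apply/setP => j; rewrite in_set0.
    case: (eqVneq i0 j) => [<-//|ij]; by rewrite -(eq _ _ ij).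
  by move=> h0; rewrite h0 cards0 in c0.
Qed.
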